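(* Let $\Gamma_1=(N,A,u)$ and $\Gamma_2=(M,B,v)$ be games and let $g=(\pi;(\tau_i)_{i\in N})$ be a cardinal game isomorphism from $\Gamma_1$ to $\Gamma_2$. Then for each $i\in N$ there exist $\beta_i>0$ and $\gamma_i\in\mathbb{R}$ with $\beta_i\tilde u_i(\sigma)+\gamma_i=\tilde v_{g.i}(g.\sigma)$ for all $\sigma\in\Delta(A)$, and $g$ preserves: (1) the players' best response correspondences: for all $i\in N$ and $\sigma\in\Delta(A)$, $\sigma_i\in\tilde b_i(\sigma_{-i})$ in $\Gamma_1$ if and only if $(g.\sigma)_{g.i}\in\tilde b_{g.i}((g.\sigma)_{-g.i})$ in $\Gamma_2$; (2) the game's best response correspondence: for all $\sigma,\sigma'\in\Delta(A)$, $\sigma\in\tilde b(\sigma')$ in $\Gamma_1$ if and only if $g.\sigma\in\tilde b(g.\sigma')$ in $\Gamma_2$; (3) mixed strategy Nash equilibria: $\sigma$ is a Nash equilibrium of $\Gamma_1$ if and only if $g.\sigma$ is a Nash equilibrium of $\Gamma_2$; (4) strict dominance of mixed strategies over pure strategies: for $i\in N$, $\sigma_i\in\Delta(A_i)$ and $s_i\in A_i$, $\sigma_i$ strictly dominates $s_i$ for player $i$ in $\Gamma_1$ if and only if $\sigma_i\circ\tau_i^{-1}$ strictly dominates $\tau_i(s_i)$ for player $\pi(i)$ in $\Gamma_2$.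
   Context: A (finite normal-form) game $\Gamma=(N,A,u)$ consists of a finite set $N$ of at least two players, a finite non-empty strategy set $A_i$ for each $i\in N$, $A=\times_{i\in N}A_i$, and utility functions $u_i:A\to\mathbb{R}$. $\Delta(A_i)$ is the set of probability distributions on $A_i$, $\Delta(A)=\times_{i\in N}\Delta(A_i)$, $\Delta(A_{-i})=\times_{j\neq i}\Delta(A_j)$, $\sigma(s)=\prod_i\sigma_i(s_i)$, and the expected utility is $\tilde u_i(\sigma)=\sum_{s\in A}\sigma(s)u_i(s)$ (pure strategies are identified with point-mass distributions). A game bijection $g=(\pi;(\tau_i)_{i\in N})$ from $\Gamma_1=(N,A,u)$ to $\Gamma_2=(M,B,v)$ consists of a bijection $\pi:N\to M$ and bijections $\tau_i:A_i\to B_{\pi(i)}$; write $g.i=\pi(i)$ and $g.\sigma\in\Delta(B)$ for the mixed profile whose component for player $\pi(i)$ is $\sigma_i\circ\tau_i^{-1}$. $g$ is a cardinal game isomorphism if for all $i\in N$, $\sigma,\sigma'\in\Delta(A)$: $\tilde u_i(\sigma)\le\tilde u_i(\sigma')\iff\tilde v_{g.i}(g.\sigma)\le\tilde v_{g.i}(g.\sigma')$. Player $i$'s best response correspondence is $\tilde b_i(\sigma_{-i})=\arg\max_{\sigma_i\in\Delta(A_i)}\tilde u_i(\sigma_i,\sigma_{-i})$; the game's is $\tilde b(\sigma)=\{\sigma'\in\Delta(A):\sigma_i'\in\tilde b_i(\sigma_{-i})\ \forall i\}$. $\sigma$ is a Nash equilibrium if no player $i$ has $\sigma_i'\in\Delta(A_i)$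 with $\tilde u_i(\sigma_i',\sigma_{-i})>\tilde u_i(\sigma_i,\sigma_{-i})$. $\sigma_i\in\Delta(A_i)$ strictly dominates $s_i\in A_i$ if $\tilde u_i(\sigma_i,\sigma_{-i})>\tilde u_i(s_i,\sigma_{-i})$ for all $\sigma_{-i}\in\Delta(A_{-i})$. *)

(* Defs.v *)
From HB Require Import structures.
From mathcomp Require Import all_boot all_order all_algebra.
From mathcomp Require Import reals.
Unset Printing Implicit Defensive.
Import Order.TTheory GRing.Theory Num.Theory.
Local Open Scope ring_scope.

Record game (R : realType) := Game {
  player : finType;
  strat : player -> finType;
  util : player -> {dffun forall i : player, strat i} -> R }.
Arguments player {R} g.
Arguments strat {R} g i.
Arguments util {R} g i p.

Definition is_game {R : realType} (G : game R) : Prop :=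
  (1 < #|player G|)%N /\ forall i, (0 < #|strat G i|)%N.

Definition mixed_strat {R : realType} {T : finType} (x : T -> R) : Prop :=
  (forall a, 0 <= x a) /\ \sum_(a : T) x a = 1.

Definition mprofile {R : realType} (G : game R) :=
  forall i : player G, strat G i -> R.

(* sigma in Delta(A) = product of the Delta(A_i). *)
Definition mixed_profile {R : realType} {G : game R} (s : mprofile G) : Prop :=
  forall i, mixed_strat (s i).

Definition pt {R : realType} {T : finType} (a0 : T) : T -> R :=
  fun a => (a == a0)%:R.

Definition EU {R : realType} {G : game R} (i : player G) (s : mprofile G) : R :=
  \sum_(p : {dffun forall j : player G, strat G j})
     (\prod_(j : player G) s j (p j)) * util G i p.

Definition dev {R : realType} {G : game R} (s : mprofile G) (i : player G)
  (x : strat G i -> R) : mprofile G := @dfwith _ (fun j => strat G j -> R) s i x.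


Definition best_resp {R : realType} {G : game R} (i : player G) (s : mprofile G)
  (x : strat G i -> R) : Prop :=
  mixed_strat x /\
  forall y : strat G i -> R, mixed_strat y -> EU i (dev s i y) <= EU i (dev s i x).

Definition game_best_resp {R : realType} {G : game R} (s s' : mprofile G) : Prop :=
  mixed_profile s /\ forall i, best_resp i s' (s i).

Definition nash {R : realType} {G : game R} (s : mprofile G) : Prop :=
  forall i (y : strat G i -> R), mixed_strat y -> ~ (EU i (dev s i y) > EU i s).

(* x in Delta(A_i) strictly dominates pure strategy a for player i:
   for all sigma_{-i} (given as the other components of a mixed profile). *)
Definition strictly_dominates {R : realType} {G : game R} (i : player G)
  (x : strat G i -> R) (a : strat G i) : Prop :=
  forall s : mprofile G, mixed_profile s ->
    EU i (dev s i x) > EU i (dev s i (pt a)).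

Record game_bij (R : realType) (G1 G2 : game R) := GameBij {
  gpi : player G1 -> player G2;
  gpiinv : player G2 -> player G1;
  gpiK : cancel gpi gpiinv;
  gpiinvK : cancel gpiinv gpi;
  gtau : forall i, strat G1 i -> strat G2 (gpi i);
  gtauinv : forall i, strat G2 (gpi i) -> strat G1 i;
  gtauK : forall i, cancel (@gtau i) (@gtauinv i);
  gtauinvK : forall i, cancel (@gtauinv i) (@gtau i) }.
Arguments game_bij {R} G1 G2.
Arguments gpi {R G1 G2} g i.
Arguments gpiinv {R G1 G2} g m.
Arguments gpiK {R G1 G2} g x.
Arguments gpiinvK {R G1 G2} g x.
Arguments gtauK {R G1 G2} g i x.
Arguments gtauinvK {R G1 G2} g i x.
Arguments gtau {R G1 G2} g {i} a.
Arguments gtauinv {R G1 G2} g {i} b.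

(* g.sigma : the component for player pi(i) is sigma_i o tau_i^{-1}.
   For m : player G2 with i := pi^{-1}(m), transport b : B_m to B_{pi(i)}. *)
Definition gact {R : realType} {G1 G2 : game R} (g : game_bij G1 G2)
  (s : mprofile G1) : mprofile G2 :=
  fun m b =>
    let i := gpiinv g m in
    s i (gtauinv g (eq_rect m (fun k => strat G2 k) b _ (esym (gpiinvK g m)))).

Definition cardinal_iso {R : realType} {G1 G2 : game R} (g : game_bij G1 G2) : Prop :=
  forall (i : player G1) (s s' : mprofile G1), mixed_profile s -> mixed_profile s' ->
    (EU i s <= EU i s' <-> EU (gpi g i) (gact g s) <= EU (gpi g i) (gact g s')).

(* Main.v *)
Require Import Defs.
From HB Require Import structures.
From mathcomp Require Import all_boot all_order all_algebra.
From mathcomp Require Import reals.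
From mathcomp Require Import ring lra.
From Stdlib Require Import FunctionalExtensionality Classical.
Import Order.TTheory GRing.Theory Num.Theory.
Local Open Scope ring_scope.

Lemma ex_min {R : realType} {T : finType} (t0 : T) (F : T -> R) :
  exists a, forall b, F a <= F b.
Proof.
case: (@arg_minP _ R T t0 xpredT F isT) => a _ H; exists a => b; exact: H.
Qed.

Lemma ex_max {R : realType} {T : finType} (t0 : T) (F : T -> R) :
  exists a, forall b, F b <= F a.
Proof.
case: (@arg_maxP _ R T t0 xpredT F isT) => a _ H; exists a => b; exact: H.
Qed.

Section Basic.
Variables (R : realType) (G : game R).
Implicit Types (s : mprofile G).

Lemma dev_in s k x : dev s k x k = x.
Proof. exact: dfwith_in. Qed.

Lemma dev_out s k x j : k != j -> dev s k x j = s j.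
Proof. exact: dfwith_out. Qed.

Lemma dev_dev s k x y : dev (dev s k x) k y = dev s k y.
Proof.
apply: functional_extensionality_dep => j.
case: (eqVneq k j) => [<-|nkj]; first by rewrite !dev_in.
by rewrite !dev_out.
Qed.

Lemma dev_id s k : dev s k (s k) = s.
Proof.
apply: functional_extensionality_dep => j.
case: (eqVneq k j) => [<-|nkj]; first by rewrite !dev_in.
by rewrite !dev_out.
Qed.

Lemma sum_pt (T : finType) (x : T -> R) (b : T) :
  \sum_a x a * pt a b = x b.
Proof.
rewrite (bigD1 b) //= /pt eqxx mulr1 big1 ?addr0 // => a /negbTE.
by rewrite eq_sym => ->; rewrite mulr0.
Qed.

Lemma prod_dev s k y (p : {dffun forall j : player G, strat G j}) :
  \prod_j dev s k y j (p j) = y (p k) * \prod_(j | j != k) s j (p j).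
Proof.
rewrite (bigD1 k) //= dev_in; congr (_ * _).
by apply: eq_bigr => j njk; rewrite dev_out // eq_sym.
Qed.

Lemma EU_dev i s k x :
  EU i (dev s k x) = \sum_a x a * EU i (dev s k (pt a)).
Proof.
rewrite /EU.
transitivity (\sum_a \sum_(p : {dffun forall j : player G, strat G j})
   x a * ((\prod_j dev s k (pt a) j (p j)) * util G i p)); last first.
  by apply: eq_bigr => a _; rewrite mulr_sumr.
rewrite [RHS]exchange_big /=; apply: eq_bigr => p _.
rewrite prod_dev.
rewrite [RHS](eq_bigr (fun a => (x a * pt a (p k)) *
   (\prod_(j | j != k) s j (p j)) * util G i p)); last first.
  by move=> a _; rewrite prod_dev !mulrA.
by rewrite -mulr_suml -mulr_suml sum_pt.
Qed.

Lemma mixed_pt (T : finType) (a : T) : mixed_strat (@pt R T a).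
Proof.
split; first by move=> b; rewrite /pt ler0n.
rewrite -[RHS](sum_pt T (fun _ => 1) a); apply: eq_bigr => b _.
by rewrite mul1r /pt eq_sym.
Qed.

End Basic.
Arguments dev_in {R G}. Arguments dev_out {R G}. Arguments dev_dev {R G}.
Arguments dev_id {R G}. Arguments sum_pt {R T}. Arguments prod_dev {R G}.
Arguments EU_dev {R G}. Arguments mixed_pt {R T}.

Section Core.
Variables (R : realType) (G : game R).
Implicit Types (s : mprofile G).
Variables (f h : mprofile G -> R).
Definition blin (F : mprofile G -> R) := forall s k (x : strat G k -> R),
  F (dev s k x) = \sum_a x a * F (dev s k (pt a)).
Hypothesis Hf : blin f.
Hypothesis Hh : blin h.
Hypothesis Hord : forall s s', mixed_profile s -> mixed_profile s' ->
  (f s <= f s' <-> h s <= h s').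
Hypothesis Hne : forall j, (0 < #|strat G j|)%N.

Lemma Heq {s s' : mprofile G} : mixed_profile s -> mixed_profile s' -> f s = f s' -> h s = h s'.
Proof.
move=> ms ms' e; apply/eqP; rewrite eq_le; apply/andP; split.
  by apply: (proj1 (Hord s s' ms ms')); rewrite e.
by apply: (proj1 (Hord s' s ms' ms)); rewrite e.
Qed.

Lemma Hlt {s s' : mprofile G} : mixed_profile s -> mixed_profile s' -> f s < f s' -> h s < h s'.
Proof.
move=> ms ms' lt; rewrite ltNge; apply/negP => /(proj2 (Hord s' s ms' ms)).
by rewrite leNgt lt.
Qed.

Definition mix {T : finType} (t : R) (x y : T -> R) := fun a => (1 - t) * x a + t * y a.

Lemma mixed_mix (T : finType) (t : R) (x y : T -> R) : 0 <= t <= 1 ->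
  mixed_strat x -> mixed_strat y -> mixed_strat (mix t x y).
Proof.
move=> /andP[t0 t1] [x0 x1] [y0 y1]; split.
  move=> a; rewrite /mix addr_ge0 // mulr_ge0 // ?subr_ge0 //.
rewrite /mix big_split /= -!mulr_sumr x1 y1; lra.
Qed.

Lemma mixed_dev {s k x} : mixed_profile s -> mixed_strat x -> mixed_profile (dev s k x).
Proof.
move=> ms mx j; case: (eqVneq k j) => [<-|nkj]; first by rewrite dev_in.
by rewrite dev_out.
Qed.

Lemma blin_mix F : blin F -> forall s k t (x y : strat G k -> R),
  F (dev s k (mix t x y)) = (1 - t) * F (dev s k x) + t * F (dev s k y).
Proof.
move=> HF s k t x y; rewrite !HF /mix !mulr_sumr -big_split /=.
by apply: eq_bigr => a _; rewrite mulrDl !mulrA.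
Qed.

Definition nondeg s k := exists a a', f (dev s k (pt a)) != f (dev s k (pt a')).
Definition Rel s k (al c : R) := forall x, mixed_strat x ->
  h (dev s k x) = al * f (dev s k x) + c.

Lemma sliceL {s k} : mixed_profile s -> nondeg s k ->
  exists al c, 0 < al /\ Rel s k al c.
Proof.
move=> ms [b0 [b1 nd]].
set F := fun a => f (dev s k (pt a)).
set H := fun a => h (dev s k (pt a)).
have [a0 Ha0] := ex_min b0 F.
have [a1 Ha1] := ex_max b0 F.
have lt01 : F a0 < F a1.
  rewrite lt_neqAle Ha1 andbT; apply/negP => /eqP e.
  move: nd; have: F b0 = F b1.
    apply/eqP; rewrite eq_le; apply/andP; split.
      by apply: le_trans (Ha1 b0) _; rewrite -e.
    by apply: le_trans (Ha1 b1) _; rewrite -e.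
  by rewrite /F => ->; rewrite eqxx.
have mp a : mixed_profile (dev s k (pt a)) by apply: mixed_dev => //; exact: mixed_pt.
have Hlt01 : H a0 < H a1 by apply: Hlt.
set al := (H a1 - H a0) / (F a1 - F a0).
exists al, (H a0 - al * F a0); split.
  by rewrite /al divr_gt0 // subr_gt0.
have key b : H b = al * F b + (H a0 - al * F a0).
  set t := (F b - F a0) / (F a1 - F a0).
  have d0 : F a1 - F a0 != 0 by rewrite subr_eq0 gt_eqF.
  have t01 : 0 <= t <= 1.
    rewrite /t divr_ge0 ?subr_ge0 ?Ha0 ?(ltW lt01) //=.
    rewrite ler_pdivrMr ?subr_gt0 // mul1r lerD2r; exact: Ha1.
  have mz : mixed_profile (dev s k (mix t (pt a0) (pt a1))).
    by apply: mixed_dev => //; apply: mixed_mix => //; exact: mixed_pt.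
  have ef : f (dev s k (mix t (pt a0) (pt a1))) = F b.
    rewrite (@blin_mix f Hf) -/(F a0) -/(F a1) /t; field; exact: d0.
  have := Heq mz (mp b) ef; rewrite (@blin_mix h Hh) -/(H a0) -/(H a1) -/(H b) => <-.
  rewrite /al /t; field; exact: d0.
move=> x [x0 x1]; rewrite Hf Hh.
rewrite (eq_bigr (fun a => al * (x a * F a) + (H a0 - al * F a0) * x a)); last first.
  by move=> a _; rewrite -/(H a) key; ring.
by rewrite big_split /= -mulr_sumr -mulr_sumr x1 mulr1.
Qed.

Definition fmix {T : finType} (x : T -> R) := mixed_strat x /\ forall a, 0 < x a.
Definition fm s := forall j, fmix (s j).

Lemma fm_mixed {s} : fm s -> mixed_profile s.
Proof. by move=> H j; case: (H j). Qed.

Lemma fm_dev s k x : fm s -> fmix x -> fm (dev s k x).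
Proof.
move=> fs fx j; case: (eqVneq k j) => [<-|nkj]; first by rewrite dev_in.
by rewrite dev_out.
Qed.

Lemma nondeg_dev s k x : nondeg s k -> nondeg (dev s k x) k.
Proof. by case=> a [a' H]; exists a, a'; rewrite !dev_dev. Qed.

Lemma Rel_dev s k x al c : Rel s k al c -> Rel (dev s k x) k al c.
Proof. by move=> H y my; rewrite dev_dev; apply: H. Qed.

Lemma fdevE s k : f s = \sum_a s k a * f (dev s k (pt a)).
Proof. by rewrite -{1}(dev_id s k) Hf. Qed.

Lemma interior {s k} : fm s -> nondeg s k -> exists a, f s < f (dev s k (pt a)).
Proof.
move=> fs [b0 [b1 nd]].
set F := fun a => f (dev s k (pt a)).
have [a Ha] := ex_max b0 F.
case: (fs k) => [[x0 x1] xp].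
have fsE : f s = \sum_b s k b * F b by rewrite (fdevE s k).
exists a; rewrite lt_neqAle; apply/andP; split; last first.
  rewrite fsE -[f (dev s k (pt a))]mul1r -x1 mulr_suml; apply: ler_sum => b _.
  by rewrite ler_wpM2l // Ha.
apply/negP => /eqP e.
have z : \sum_b s k b * (F a - F b) = 0.
  by rewrite (eq_bigr (fun b => s k b * F a - s k b * F b)) ?sumrB -?mulr_suml ?x1 ?mul1r -?fsE ?e ?subrr // => b _; rewrite mulrBr.
have zb b : s k b * (F a - F b) = 0.
  by apply: (psumr_eq0P _ z) => // c _; rewrite mulr_ge0 // subr_ge0.
have Fb b : F b = F a.
  by move: (zb b) => /eqP; rewrite mulf_eq0 gt_eqF //= subr_eq0 => /eqP.
by move: nd; rewrite -/(F b0) -/(F b1) !Fb eqxx.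
Qed.

Lemma samev {s t j k a1 c1 a2 c2} : fm s -> fm t -> nondeg s j -> nondeg t k ->
  Rel s j a1 c1 -> Rel t k a2 c2 -> f s = f t -> a1 = a2.
Proof.
move=> fs ft nds ndt R1 R2 est.
have [b1 Hb1] := interior fs nds.
have [b2 Hb2] := interior ft ndt.
set F1 := f (dev s j (pt b1)) in Hb1 *.
set F2 := f (dev t k (pt b2)) in Hb2 *.
set d1 := F1 - f s. set d2 := F2 - f t.
have d1p : 0 < d1 by rewrite subr_gt0.
have d2p : 0 < d2 by rewrite subr_gt0.
have dp : 0 < d1 + d2 by rewrite addr_gt0.
set t1 := d2 / (d1 + d2). set t2 := d1 / (d1 + d2).
have t1p : 0 < t1 by rewrite divr_gt0.
have t2p : 0 < t2 by rewrite divr_gt0.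
have t1l : t1 <= 1 by rewrite ler_pdivrMr // mul1r lerDr ltW.
have t2l : t2 <= 1 by rewrite ler_pdivrMr // mul1r lerDl ltW.
have mx1 : mixed_strat (mix t1 (s j) (pt b1)).
  by apply: mixed_mix; [rewrite ltW|case: (fs j)|apply: mixed_pt].
have mx2 : mixed_strat (mix t2 (t k) (pt b2)).
  by apply: mixed_mix; [rewrite ltW|case: (ft k)|apply: mixed_pt].
have fx1 : f (dev s j (mix t1 (s j) (pt b1))) = f s + t1 * d1.
  by rewrite (@blin_mix f Hf) dev_id -/F1 /d1; ring.
have fx2 : f (dev t k (mix t2 (t k) (pt b2))) = f t + t2 * d2.
  by rewrite (@blin_mix f Hf) dev_id -/F2 /d2; ring.
have ee : t1 * d1 = t2 * d2.
  rewrite /t1 /t2; field; rewrite gt_eqF //.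
have ms := fm_mixed fs. have mt := fm_mixed ft.
have mdx1 := mixed_dev ms mx1. have mdx2 := mixed_dev mt mx2.
have hx : h (dev s j (mix t1 (s j) (pt b1))) = h (dev t k (mix t2 (t k) (pt b2))).
  by apply: Heq => //; rewrite fx1 fx2 est ee.
have hst : h s = h t by apply: Heq.
have E1 := R1 _ mx1. have E3 := R2 _ mx2.
have E2 : h s = a1 * f s + c1 by rewrite -{1}(dev_id s j) R1 ?dev_id //; case: (fs j).
have E4 : h t = a2 * f t + c2 by rewrite -{1}(dev_id t k) R2 ?dev_id //; case: (ft k).
have e0 : t1 * d1 != 0 by rewrite mulf_neq0 // gt_eqF.
apply: (mulIf e0).
have : h (dev s j (mix t1 (s j) (pt b1))) - h s = h (dev t k (mix t2 (t k) (pt b2))) - h t.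
  by rewrite hx hst.
rewrite E1 E2 E3 E4 fx1 fx2 -est -ee.
set z := t1 * d1. set y := f s. move=> H.
have -> : a1 * z = a1 * (y + z) + c1 - (a1 * y + c1) by ring.
have -> : a2 * z = a2 * (y + z) + c2 - (a2 * y + c2) by ring.
exact: H.
Qed.

Lemma chain {Inv : mprofile G -> Prop} {s t} : fm s -> fm t ->
  (forall r k (x : strat G k -> R), fm r -> fmix x -> Inv r -> Inv (dev r k x)) ->
  Inv s -> Inv t.
Proof.
move=> fs ft HI Is.
pose r l := foldr (fun k r => dev r k (t k)) s l.
have Hr l : fm (r l) /\ Inv (r l).
  elim: l => [|k l [IH1 IH2]] //=; split.
    by apply: fm_dev.
  by apply: HI => //.
have rE l j : r l j = if j \in l then t j else s j.
  elim: l => [|k l IH] //=; rewrite in_cons.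
  case: (eqVneq k j) => [<-|nkj]; first by rewrite dev_in.
  by rewrite dev_out // IH.
have -> : t = r (enum (player G)).
  by apply: functional_extensionality_dep => j; rewrite rE mem_enum.
by case: (Hr (enum (player G))).
Qed.

Definition unif : mprofile G := fun j a => (#|strat G j|%:R)^-1.

Lemma fm_unif : fm unif.
Proof.
move=> j; have cp : (0 : R) < #|strat G j|%:R by rewrite ltr0n.
split; last by move=> a; rewrite /unif invr_gt0.
split; first by move=> a; rewrite /unif invr_ge0 ltW.
have e (c : R) n : c *+ n = c * n%:R by rewrite mulr_natr.
by rewrite /unif sumr_const e mulVf // gt_eqF.
Qed.

Lemma ext (g' : mprofile G -> R) :
  (forall s k x, mixed_strat x -> g' (dev s k x) = \sum_a x a * g' (dev s k (pt a))) ->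
  (forall s, fm s -> g' s = 0) -> forall s, mixed_profile s -> g' s = 0.
Proof.
move=> Hg Hz.
suff H : forall (l : seq (player G)) s, mixed_profile s -> (forall j, j \notin l -> fmix (s j)) -> g' s = 0.
  by move=> s ms; apply: (H (enum (player G))) => // j; rewrite mem_enum.
elim=> [|k l IH] s ms Hs; first by apply: Hz => j; apply: Hs.
set rho := mix (1/2) (s k) (unif k).
have fu := fm_unif k.
have frho : fmix rho.
  split; first by apply: mixed_mix => //; [lra | case: fu].
  move=> a; rewrite /rho /mix; case: fu => _ /(_ a) up.
  have := (ms k).1 a; lra.
have aff : g' (dev s k rho) = (1 - 1/2) * g' (dev s k (s k)) + 1/2 * g' (dev s k (unif k)).
  rewrite Hg; last by case: frho.
  rewrite Hg ?(ms k) // Hg; last by case: fu.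
  rewrite !mulr_sumr -big_split /=; apply: eq_bigr => a _.
  by rewrite /rho /mix mulrDl !mulrA.
have Z1 : g' (dev s k rho) = 0.
  apply: IH; first by apply: mixed_dev => //; case: frho.
  move=> j jl; case: (eqVneq k j) => [<-|nkj]; first by rewrite dev_in.
  by rewrite dev_out //; apply: Hs; rewrite in_cons negb_or jl eq_sym nkj.
have Z2 : g' (dev s k (unif k)) = 0.
  apply: IH; first by apply: mixed_dev => //; case: fu.
  move=> j jl; case: (eqVneq k j) => [<-|nkj]; first by rewrite dev_in.
  by rewrite dev_out //; apply: Hs; rewrite in_cons negb_or jl eq_sym nkj.
move: aff; rewrite Z1 Z2 dev_id; lra.
Qed.

Lemma degen {r k x} : mixed_profile r -> ~ nondeg r k -> mixed_strat x ->
  f (dev r k x) = f r.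
Proof.
move=> mr nd [x0 x1].
have Fc a a' : f (dev r k (pt a)) = f (dev r k (pt a')).
  by apply/eqP; apply/negP => /negP ne; apply: nd; exists a, a'.
case/card_gt0P: (Hne k) => a0 _.
have E y : mixed_strat y -> \sum_a y a * f (dev r k (pt a)) = f (dev r k (pt a0)).
  case=> _ y1; rewrite (eq_bigr (fun a => y a * f (dev r k (pt a0)))).
    by rewrite -mulr_suml y1 mul1r.
  by move=> a _; rewrite (Fc a a0).
by rewrite Hf E // (fdevE r k) E // (mr k).
Qed.

Lemma affine_ext (al K : R) : forall s k x, mixed_strat x ->
  (h (dev s k x) - (al * f (dev s k x) + K)) =
  \sum_a x a * (h (dev s k (pt a)) - (al * f (dev s k (pt a)) + K)).
Proof.
move=> s k x [x0 x1]; rewrite Hf Hh.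
rewrite [RHS](eq_bigr (fun a => x a * h (dev s k (pt a)) - (al * (x a * f (dev s k (pt a))) + K * x a))).
  by rewrite sumrB big_split /= -!mulr_sumr x1 mulr1.
by move=> a _; ring.
Qed.

Theorem core : exists beta gamma, 0 < beta /\
  forall s, mixed_profile s -> beta * f s + gamma = h s.
Proof.
case: (classic (exists s k, fm s /\ nondeg s k)) => [[sg [j [fsg nd]]] | Hno].
  have [a1 [c1 [a1p R1]]] := sliceL (fm_mixed fsg) nd.
  pose K := h sg - a1 * f sg.
  pose Inv r := (exists rho j' c, fm rho /\ nondeg rho j' /\ Rel rho j' a1 c /\ f rho = f r)
     /\ h r - a1 * f r = K.
  have Hall t : fm t -> Inv t.
    move=> ft; apply: (chain fsg ft); last first.
      by split => //; exists sg, j, c1.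
    move=> r k x fr fx [[rho [j' [c [frho [ndrho [Rrho e]]]]]] E].
    have mr := fm_mixed fr. have mx : mixed_strat x by case: fx.
    case: (classic (nondeg r k)) => ndr.
      have [a' [c' [_ R']]] := sliceL mr ndr.
      have ea : a1 = a' := samev frho fr ndrho ndr Rrho R' e.
      subst a'; split.
        exists (dev r k x), k, c'; split; first by apply: fm_dev.
        by split; [apply: nondeg_dev | split; [apply: Rel_dev|]].
      have Er : h r = a1 * f r + c'.
        by rewrite -{1}(dev_id r k) R' ?dev_id //; apply: mr.
      by rewrite -E R' // Er; ring.
    have ef := degen mr ndr mx.
    have eh : h (dev r k x) = h r by apply: Heq => //; apply: mixed_dev.
    split; first by exists rho, j', c; rewrite ef.
    by rewrite ef eh.
  exists a1, K; split => // s ms.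
  apply/eqP; rewrite eq_sym -subr_eq0; apply/eqP.
  apply: (@ext (fun s => h s - (a1 * f s + K))) => //.
    exact: affine_ext.
  move=> t ft; case: (Hall t ft) => _ E; rewrite -E; ring.
pose Inv r := f r = f unif /\ h r = h unif.
have Hall t : fm t -> Inv t.
  move=> ft; apply: (chain fm_unif ft) => //.
  move=> r k x fr fx [E1 E2].
  have mr := fm_mixed fr. have mx : mixed_strat x by case: fx.
  have ndr : ~ nondeg r k by move=> nd; apply: Hno; exists r, k.
  have ef := degen mr ndr mx.
  have eh : h (dev r k x) = h r by apply: Heq => //; apply: mixed_dev.
  by rewrite /Inv ef eh.
exists 1, (h unif - f unif); split => // s ms.
apply/eqP; rewrite eq_sym -subr_eq0; apply/eqP.
apply: (@ext (fun s => h s - (1 * f s + (h unif - f unif)))) => //.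
  exact: affine_ext.
move=> t ft; case: (Hall t ft) => E1 E2; rewrite E1 E2; ring.
Qed.

End Core.
Arguments mixed_dev {R G s k x}.

Section Transport.
Variables (R : realType) (G1 G2 : game R) (g : game_bij G1 G2).

Lemma gactE (s : mprofile G1) j a : gact g s (gpi g j) (gtau g a) = s j a.
Proof.
rewrite /gact; move: (gpiinvK g (gpi g j)).
have := gpiK g j; move: (gpiinv g (gpi g j)) => k ek e; subst k.
by rewrite (eq_irrelevance e erefl) /= gtauK.
Qed.

Lemma gact_ext (t1 t2 : mprofile G2) :
  (forall j a, t1 (gpi g j) (gtau g a) = t2 (gpi g j) (gtau g a)) -> t1 = t2.
Proof.
move=> H; apply: functional_extensionality_dep => m.
apply: functional_extensionality; move: (gpiinvK g m) => e; move: e.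
move: (gpiinv g m) => j e; subst m => b.
by rewrite -(gtauinvK g j b) H.
Qed.

Lemma gact_pi (s : mprofile G1) j : gact g s (gpi g j) = fun b => s j (gtauinv g b).
Proof.
by apply: functional_extensionality => b; rewrite -{1}(gtauinvK g j b) gactE.
Qed.

Lemma gact_dev (s : mprofile G1) k x :
  gact g (dev s k x) = dev (gact g s) (gpi g k) (fun b => x (gtauinv g b)).
Proof.
apply: gact_ext => j a; rewrite gactE.
case: (eqVneq k j) => [ekj|nkj]; first by subst j; rewrite !dev_in gtauK.
rewrite !dev_out ?gactE //.
by rewrite (inj_eq (can_inj (gpiK g))).
Qed.

Lemma gact_surj (t : mprofile G2) : exists s, gact g s = t.
Proof.
by exists (fun j a => t (gpi g j) (gtau g a)); apply: gact_ext => j a; rewrite gactE.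
Qed.

Lemma sum_tau j (F : strat G1 j -> R) : \sum_b F (gtauinv g b) = \sum_a F a.
Proof.
rewrite (reindex (@gtau _ _ _ g j)) /=.
  by apply: eq_bigr => a _; rewrite gtauK.
by exists (gtauinv g) => b _; [rewrite gtauK | rewrite gtauinvK].
Qed.

Lemma mixed_comp j (x : strat G1 j -> R) :
  mixed_strat (fun b => x (gtauinv g b)) <-> mixed_strat x.
Proof.
split=> [[h0 h1]|[h0 h1]]; split.
- by move=> a; rewrite -(gtauK g j a); apply: h0.
- by rewrite -sum_tau.
- by move=> b; apply: h0.
- by rewrite sum_tau.
Qed.

Lemma mixed_gact (s : mprofile G1) : mixed_profile s <-> mixed_profile (gact g s).
Proof.
split=> H.
  move=> m; rewrite -(gpiinvK g m) gact_pi; apply/mixed_comp; exact: H.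
by move=> j; apply/(mixed_comp j); rewrite -gact_pi; apply: H.
Qed.

Lemma pt_comp k (a : strat G1 k) : (fun b => pt a (gtauinv g b)) = pt (gtau g a) :> (_ -> R).
Proof.
apply: functional_extensionality => b; rewrite /pt.
by rewrite -(inj_eq (can_inj (gtauK g k))) gtauinvK.
Qed.

Lemma blin_gact i : @blin R G1 (fun s => EU (gpi g i) (gact g s)).
Proof.
move=> s k x /=; rewrite gact_dev EU_dev.
rewrite -[RHS](sum_tau k (fun a => x a * EU (gpi g i) (gact g (dev s k (pt a))))).
apply: eq_bigr => b _; congr (_ * _).
by rewrite gact_dev pt_comp gtauinvK.
Qed.

End Transport.

Arguments gactE {R G1 G2} g s j a. Arguments gact_ext {R G1 G2} g t1 t2.
Arguments gact_pi {R G1 G2} g s j. Arguments gact_dev {R G1 G2} g s k x.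
Arguments gact_surj {R G1 G2} g t. Arguments mixed_comp {R G1 G2} g j x.
Arguments mixed_gact {R G1 G2} g s. Arguments pt_comp {R G1 G2} g k a.
Arguments blin_gact {R G1 G2} g i.

Lemma comp_tau {R : realType} {G1 G2 : game R} (g : game_bij G1 G2) j
  (y : strat G2 (gpi g j) -> R) :
  y = (fun b => (fun a => y (gtau g a)) (gtauinv g b)).
Proof. by apply: functional_extensionality => b; rewrite gtauinvK. Qed.

Lemma dev_gact {R : realType} {G1 G2 : game R} (g : game_bij G1 G2) s j
  (y : strat G2 (gpi g j) -> R) :
  dev (gact g s) (gpi g j) y = gact g (dev s j (fun a => y (gtau g a))).
Proof. by rewrite gact_dev -comp_tau. Qed.

Theorem mainTheorem7 (R : realType) (G1 G2 : game R) (g : game_bij G1 G2) :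
  is_game G1 -> is_game G2 -> cardinal_iso g ->
  (forall i : player G1, exists beta gamma : R, 0 < beta /\
     forall s : mprofile G1, mixed_profile s ->
       beta * EU i s + gamma = EU (gpi g i) (gact g s)) /\
  (forall (i : player G1) (s : mprofile G1), mixed_profile s ->
     (best_resp i s (s i) <->
      best_resp (gpi g i) (gact g s) (gact g s (gpi g i)))) /\
  (forall s s' : mprofile G1, mixed_profile s -> mixed_profile s' ->
     (game_best_resp s s' <-> game_best_resp (gact g s) (gact g s'))) /\
  (forall s : mprofile G1, mixed_profile s ->
     (nash s <-> nash (gact g s))) /\
  (forall (i : player G1) (x : strat G1 i -> R) (a : strat G1 i), mixed_strat x ->
     (strictly_dominates i x a <->
      strictly_dominates (gpi g i) (fun b => x (gtauinv g b)) (gtau g a))).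
Proof.
move=> [_ Hne] _ Hiso.
have Hlt i s s' : mixed_profile s -> mixed_profile s' ->
    (EU i s < EU i s' <-> EU (gpi g i) (gact g s) < EU (gpi g i) (gact g s')).
  move=> ms ms'; rewrite !ltNge; split => /negP H; apply/negP => H'; apply: H.
    exact: (proj2 (Hiso i s' s ms' ms) H').
  exact: (proj1 (Hiso i s' s ms' ms) H').
have BR i s x : mixed_profile s ->
    (best_resp i s x <-> best_resp (gpi g i) (gact g s) (fun b => x (gtauinv g b))).
  move=> ms; split=> [[mx H]|[mx H]]; split.
  - by apply/mixed_comp.
  - move=> y my; rewrite dev_gact -gact_dev.
    have my' : mixed_strat (fun a => y (gtau g a)) by apply/(mixed_comp g i); rewrite -comp_tau.
    apply: (proj1 (Hiso i _ _ (mixed_dev ms my') (mixed_dev ms mx))); exact: H.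
  - by apply/(mixed_comp g i).
  - move=> y my.
    have my' : mixed_strat (fun b => y (gtauinv g b)) by apply/mixed_comp.
    apply: (proj2 (Hiso i _ _ (mixed_dev ms my) (mixed_dev ms (proj1 (mixed_comp g i x) mx)))).
    rewrite !gact_dev; exact: H.
split.
  move=> i.
  have [be [ga [bp E]]] := @core R G1 (EU i) (fun s => EU (gpi g i) (gact g s))
    (fun s k x => EU_dev i s k x) (blin_gact g i) (Hiso i) Hne.
  by exists be, ga; split.
split.
  move=> i s ms; rewrite gact_pi; apply: BR => //.
split.
  move=> s s' ms ms'; split=> [[_ H]|[_ H]]; split.
  - exact: (proj1 (mixed_gact g s) ms).
  - move=> m; rewrite -(gpiinvK g m) gact_pi; apply: (proj1 (BR _ _ _ ms')); exact: H.
  - by [].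
  - move=> i; apply: (proj2 (BR i s' (s i) ms')); rewrite -gact_pi; exact: H.
split.
  move=> s ms; split=> H.
    move=> m; rewrite -(gpiinvK g m); move: (gpiinv g m) => j y my.
    rewrite dev_gact.
    have my' : mixed_strat (fun a => y (gtau g a)) by apply/(mixed_comp g j); rewrite -comp_tau.
    move/(proj2 (Hlt j _ _ ms (mixed_dev ms my'))); exact: H.
  move=> i y my /(proj1 (Hlt i _ _ ms (mixed_dev ms my))).
  rewrite gact_dev; apply: H; exact/mixed_comp.
move=> i x a mx; split=> H.
  move=> t mt; have [s es] := gact_surj g t; subst t.
  have ms : mixed_profile s by apply: (proj2 (mixed_gact g s)).
  rewrite -pt_comp -!gact_dev.
  by apply: (proj1 (Hlt i _ _ (mixed_dev ms (mixed_pt a)) (mixed_dev ms mx))); apply: H.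
move=> s ms.
apply: (proj2 (Hlt i _ _ (mixed_dev ms (mixed_pt a)) (mixed_dev ms mx))).
rewrite !gact_dev pt_comp; apply: H; exact: (proj1 (mixed_gact g s) ms).
Qed.
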